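(* Consider $\dot{x} = f(x) + g(x)u$, $x\in\mathcal{X}\subseteq\mathbb{R}^n$, $u\in\mathcal{U}\subseteq\mathbb{R}^m$, with $f,g$ continuously differentiable and $\mathcal{U}$ a convex polytope; let $h$ be continuously differentiable, $\mathcal{C}_S=\{x:h(x)\ge0\}$, and let $k_b$ be a backup controller with backup set $\mathcal{C}_B=\{x:h_b(x)\ge0\}\subseteq\mathcal{C}_S$ (see context). Let $k_e(x,\theta)$, $\theta\in\mathbb{R}^p$, be a parameterized expanding controller with values in $\mathcal{U}$, and let $\eta:\mathcal{X}\to[0,1]$ be continuously differentiable with $\eta(x)=1$ for all $x\in\mathcal{C}_B$. Consider the augmented state $\hat x = (x,\theta)\in\hat{\mathcal{X}} = \mathcal{X}\times\mathbb{R}^p$ and augmented dynamics $$\dot{\hat x} = \hat f(\hat x)+\hat g(\hat x)\hat u,\quad \hat f(\hat x) = \begin{bmatrix} f(x)\\ 0_{p\times1}\end{bmatrix},\ \hat g(\hat x) = \begin{bmatrix} g(x) & 0_{n\times p}\\ 0_{p\times m} & I_p\end{bmatrix},$$ with $\hat u = (u,u_\theta)\in\hat{\mathcal{U}}=\mathcal{U}\times\mathbb{R}^p$. Define $\hat k_s(\hat x) = \big((1-\eta(x))k_e(x,\theta)+\eta(x)k_b(x),\ 0_{p\times1}\big)$ and $\hat{\mathcal{C}}_B = \{\hat x\in\hat{\mathcal{X}}: h_b(x)\ge 0\}$. Then $\hat k_s$ renders $\hat{\mathcal{C}}_B$ forward invariant along the augmented system $\dot{\hat x} = \hat f(\hat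 x)+\hat g(\hat x)\hat k_s(\hat x)$.
   Context: A set is forward invariant along a closed-loop system if solutions starting in it remain in it for all $t\ge0$. A backup controller is a continuously differentiable $k_b:\mathcal{X}\to\mathcal{U}$ rendering $\mathcal{C}_B=\{x\in\mathcal{X}: h_b(x)\ge0\}\subseteq\mathcal{C}_S$ forward invariant for $\dot x=f(x)+g(x)k_b(x)$, where $h_b$ is continuously differentiable with $\nabla h_b(x)\neq0$ on $\partial\mathcal{C}_B$. *)

(* Defs.v *)
From HB Require Import structures.
From mathcomp Require Import all_boot all_order all_algebra.
From mathcomp Require Import all_classical all_reals all_analysis.
Set Implicit Arguments. Unset Strict Implicit. Unset Printing Implicit Defensive.
Import Order.TTheory GRing.Theory Num.Theory.
Import numFieldNormedType.Exports.
Local Open Scope classical_set_scope.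
Local Open Scope ring_scope.

(* Continuously differentiable on a set X (X open in all uses):
   differentiable at every point of X, and every directional derivative
   y |-> 'D_v F y is continuous at every point of X. *)
Definition C1_on (R : realType) (V W : normedModType R) (X : set V) (F : V -> W) : Prop :=
  (forall x, X x -> differentiable F x) /\
  (forall v x, X x -> {for x, continuous (fun y => 'D_v F y)}).

Definition bdry (R : realType) (V : normedModType R) (A : set V) : set V :=
  closure A `\` interior A.

Definition convex_polytope (R : realType) (m : nat) (U : set 'cV[R]_m) : Prop :=
  [/\ exists (k : nat) (A : 'M[R]_(k, m)) (b : 'cV[R]_k),
        U = [set u | forall i : 'I_k, (A *m u) i ord0 <= b i ord0],
      bounded_set U & U !=set0].

Definition is_solution (R : realType) (V : normedModType R) (Xs : set V)
    (F : V -> V) (phi : R -> V) (T : R) : Prop :=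
  forall t : R, 0 <= t <= T -> Xs (phi t) /\ is_derive t (1 : R) phi (F (phi t)).

Definition forward_invariant (R : realType) (V : normedModType R) (Xs : set V)
    (F : V -> V) (C : set V) : Prop :=
  forall (phi : R -> V) (T : R), 0 <= T -> is_solution Xs F phi T ->
    C (phi 0) -> forall t : R, 0 <= t <= T -> C (phi t).

(* Main.v *)
Require Import Defs.
From HB Require Import structures.
From mathcomp Require Import all_boot all_order all_algebra.
From mathcomp Require Import all_classical all_reals all_analysis.
From mathcomp Require Import ring lra.
Import Order.TTheory GRing.Theory Num.Theory.
Import numFieldNormedType.Exports.
Local Open Scope classical_set_scope.
Local Open Scope ring_scope.

Set Implicit Arguments. Unset Strict Implicit. Unset Printing Implicit Defensive.



Section P1.
Context {R : realType}.

Lemma mx_entry_le a b (A : 'M[R]_(a,b)) i j : `|A i j| <= `|A|.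
Proof.
rewrite [leRHS]/Num.Def.normr /= mx_normrE.
by apply/bigmax_geP; right => /=; exists (i, j).
Qed.

Lemma mx_norm_leP a b (A : 'M[R]_(a,b)) c : 0 <= c ->
  (forall i j, `|A i j| <= c) -> `|A| <= c.
Proof.
move=> c0 H; rewrite [leLHS]/Num.Def.normr /= mx_normrE.
by apply: bigmax_le => // -[i j] _; exact: H.
Qed.

Lemma mx_mul_norm a k b (A : 'M[R]_(a,k)) (B : 'M[R]_(k,b)) :
  `|A *m B| <= k%:R * (`|A| * `|B|).
Proof.
apply: mx_norm_leP; first by rewrite mulr_ge0 // mulr_ge0.
move=> i j; rewrite mxE.
apply: le_trans (ler_norm_sum _ _ _) _.
apply: le_trans (_ : \sum_(l < k) (`|A| * `|B|) <= _).
  apply: ler_sum => l _; rewrite normrM.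
  by apply: ler_pM => //; exact: mx_entry_le.
by rewrite sumr_const card_ord mulr_natl.
Qed.

Lemma mvi_R (w dw : R -> R) (s0 s1 B : R) : s0 <= s1 ->
  (forall t : R, s0 <= t <= s1 -> is_derive t (1:R) w (dw t)) ->
  (forall t : R, s0 <= t <= s1 -> `|dw t| <= B) ->
  `|w s1 - w s0| <= B * (s1 - s0).
Proof.
move=> s01 Hd HB.
have Hc : {within `[s0, s1], continuous w}.
  apply: derivable_within_continuous => t; rewrite in_itv /= => /andP[? ?].
  by have [] := Hd t ltac:(lra).
have Hi : forall x, x \in `]s0, s1[ -> is_derive x (1:R) w (dw x).
  by move=> x; rewrite in_itv /= => /andP[? ?]; apply: Hd; lra.
have [c] := MVT_segment s01 Hi Hc.
rewrite in_itv /= => /andP[c0 c1] ->.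
rewrite normrM (ger0_norm (x:=s1 - s0)) ?subr_ge0 //.
by apply: ler_wpM2r; [rewrite subr_ge0| apply: HB; rewrite c0 c1].
Qed.

End P1.



Section P2.
Context {R : realType}.

Lemma is_derive_entry a b (w : R -> 'M[R]_(a,b)) t dw i j :
  is_derive t (1:R) w dw -> is_derive t (1:R) (fun s => w s i j) (dw i j).
Proof.
move=> [dv Dv].
have dij : derivable (fun s => w s i j) t 1 by move/derivable_mxP: dv; apply.
apply: DeriveDef => //.
by rewrite -Dv derive_mx // mxE.
Qed.

Definition MVI (W : normedModType R) := forall (w dw : R -> W) (s0 s1 B : R),
  s0 <= s1 -> (forall t : R, s0 <= t <= s1 -> is_derive t (1:R) w (dw t)) ->
  (forall t : R, s0 <= t <= s1 -> `|dw t| <= B) ->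
  `|w s1 - w s0| <= B * (s1 - s0).

Lemma MVI_R : MVI R^o.
Proof. move=> w dw s0 s1 B; exact: mvi_R. Qed.

Lemma MVI_mx a b : MVI 'M[R]_(a,b).
Proof.
move=> w dw s0 s1 B s01 Hd HB.
have B0 : 0 <= B by apply: le_trans (HB s0 _); rewrite ?lexx ?s01.
apply: mx_norm_leP; first by rewrite mulr_ge0 // subr_ge0.
move=> i j; rewrite !mxE.
apply: (@mvi_R R (fun s => w s i j) (fun s => dw s i j)) => //.
  by move=> t /Hd; exact: is_derive_entry.
by move=> t /HB; apply: le_trans; exact: mx_entry_le.
Qed.

End P2.



Section P3.
Context {R : realType}.

Lemma is_derive_seg (V W : normedModType R) (G : V -> W) x v (s : R) :
  derivable G (x + s *: v) v ->
  is_derive s (1:R) (fun s => G (x + s *: v)) ('D_v G (x + s *: v)).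
Proof.
have E : (fun h : R => h^-1 *: ((fun s => G (x + s *: v)) (h *: (1:R) + s) - G (x + s *: v)))
   = (fun h : R => h^-1 *: (G (h *: v + (x + s *: v)) - G (x + s *: v))).
  apply: funext => h /=; congr (_ *: (G _ - _)).
  by rewrite [h%:A]mulr1 scalerDl addrCA.
move=> dG; apply: DeriveDef.
  by rewrite /derivable E.
by rewrite /derive E.
Qed.

Lemma convex_id (K : nzRingType) (V : lmodType K) (x0 x y : V) (s : K) :
  x0 - (x + s *: (y - x)) = (1 - s) *: (x0 - x) + s *: (x0 - y).
Proof.
by rewrite scalerBl scale1r !scalerBr opprD !opprB -[RHS]addrA subrKA addrA.
Qed.

Definition LL (V W : normedModType R) (F : V -> W) (x0 : V) :=
  exists r, 0 < r /\ exists L, 0 <= L /\ forall x y, `|x0 - x| < r -> `|x0 - y| < r ->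
     `|F x - F y| <= L * `|x - y|.

Lemma col_sum_delta k (v : 'cV[R]_k) : v = \sum_(j < k) v j 0 *: delta_mx j 0.
Proof.
rewrite {1}(matrix_sum_delta v); apply: eq_bigr => j _.
by rewrite big_ord1.
Qed.

Lemma C1_LL k (W : normedModType R) (mviW : MVI W) (A : set 'cV[R]_k)
   (G : 'cV[R]_k -> W) x0 :
  C1_on A G -> (exists r, 0 < r /\ forall y, `|x0 - y| < r -> A y) -> LL G x0.
Proof.
move=> [dG cG] [r0 [r00 Ar0]].
have Ax0 : A x0 by apply: Ar0; rewrite subrr normr0.
pose e j : 'cV[R]_k := delta_mx j 0.
have Hn : \forall y \near x0, forall j, `|'D_(e j) G y - 'D_(e j) G x0| < 1.
  apply: (@filter_forall _ 'I_k (fun j y => `|'D_(e j) G y - 'D_(e j) G x0| < 1) (nbhs x0) (nbhs_filter x0)) => j.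
  have := cG (e j) x0 Ax0.
  move/cvgrPdist_lt => /(_ 1 ltr01).
  by apply: filter_app; near=> y => H; rewrite distrC.
have [r1 r10 Hr1] := (nbhs_ballP _ _).1 Hn.
pose K := \sum_(j < k) (`|'D_(e j) G x0| + 1).
have K0 : 0 <= K by apply: sumr_ge0 => j _; rewrite addr_ge0.
exists (Num.min r0 r1); split; first by rewrite lt_min r00 r10.
exists K; split => // x y xr yr.
pose z s := x + s *: (y - x).
have zr : forall s : R, 0 <= s <= 1 -> `|x0 - z s| < Num.min r0 r1.
  move=> s /andP[s0 s1].
  rewrite /z convex_id.
  apply: le_lt_trans (ler_normD _ _) _.
  rewrite !normrZ (ger0_norm s0) ger0_norm ?subr_ge0 //.
  have [->|sp] := eqVneq s 0.
    by rewrite subr0 mul1r mul0r addr0.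
  have sgt : 0 < s by rewrite lt_neqAle eq_sym sp s0.
  have -> : Num.min r0 r1 = (1 - s) * Num.min r0 r1 + s * Num.min r0 r1 by ring.
  have [->|s1p] := eqVneq s 1.
    by rewrite subrr !mul0r !add0r ltr_pM2l.
  have s1gt : 0 < 1 - s by rewrite subr_gt0 lt_neqAle s1p s1.
  by apply: ltrD; rewrite ltr_pM2l.
have Az : forall s : R, 0 <= s <= 1 -> A (z s).
  move=> s /zr H; apply: Ar0; apply: lt_le_trans H _; by rewrite ge_min lexx.
have Dz : forall s : R, 0 <= s <= 1 -> `|'D_(y - x) G (z s)| <= K * `|y - x|.
  move=> s /[dup] s01 /Az Azs.
  have zball : ball x0 r1 (z s).
    rewrite -ball_normE /ball_ /=; apply: lt_le_trans (zr s s01) _; by rewrite ge_min lexx orbT.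
  rewrite deriveE; last exact: dG.
  rewrite {1}(col_sum_delta (y - x)) linear_sum /=.
  apply: le_trans (ler_norm_sum _ _ _) _.
  rewrite /K mulr_suml; apply: ler_sum => j _.
  rewrite linearZ /= normrZ mulrC.
  apply: ler_pM => //.
    rewrite -deriveE; last exact: dG.
    have := Hr1 _ zball j.
    move=> H; have := ler_normD ('D_(e j) G (z s) - 'D_(e j) G x0) ('D_(e j) G x0).
    rewrite subrK => H2; apply: le_trans H2 _.
    by rewrite addrC lerD2l ltW.
  exact: mx_entry_le.
have := mviW (fun s => G (z s)) (fun s => 'D_(y - x) G (z s)) 0 1 (K * `|y - x|) ler01.
have z1 : z 1 = y by rewrite /z scale1r addrC subrK.
have z0 : z 0 = x by rewrite /z scale0r addr0.
rewrite z1 z0 subr0 mulr1 => H.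
rewrite distrC (distrC x); apply: H => //.
move=> t /[dup] t01 /Az Azt.
apply: is_derive_seg; apply: diff_derivable; exact: dG.
Unshelve. all: by end_near.
Qed.

End P3.



Section P4.
Context {R : realType}.
Variables (V : normedModType R).

Lemma LL_bnd (W : normedModType R) (F : V -> W) x0 : LL F x0 ->
  exists r, 0 < r /\ exists M, 0 <= M /\ forall x, `|x0 - x| < r -> `|F x| <= M.
Proof.
move=> [r [r0 [L [L0 H]]]]; exists r; split => //.
exists (`|F x0| + L * r); split; first by rewrite addr_ge0 // mulr_ge0 // ltW.
move=> x xr.
have := H x0 x; rewrite subrr normr0 => /(_ r0 xr) H2.
have : `|F x| <= `|F x0| + `|F x - F x0|.
  by apply: le_trans (ler_normD _ _); rewrite addrC subrK.
move=> H3; apply: le_trans H3 _; rewrite lerD2l distrC.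
by apply: le_trans H2 _; apply: ler_wpM2l => //; apply: ltW.
Qed.

Lemma LL_shrink (W : normedModType R) (F : V -> W) x0 : LL F x0 ->
  forall r', 0 < r' -> exists r, 0 < r /\ r <= r' /\ exists L, 0 <= L /\
    forall x y, `|x0 - x| < r -> `|x0 - y| < r -> `|F x - F y| <= L * `|x - y|.
Proof.
move=> [r [r0 [L [L0 H]]]] r' r'0; exists (Num.min r r'); split.
  by rewrite lt_min r0 r'0.
split; first by rewrite ge_min lexx orbT.
exists L; split => // x y xr yr; apply: H.
  by apply: lt_le_trans xr _; rewrite ge_min lexx.
by apply: lt_le_trans yr _; rewrite ge_min lexx.
Qed.

Lemma LL_cst (W : normedModType R) (c : W) x0 : LL (fun _ : V => c) x0.
Proof.
exists 1; split => //; exists 0; split => // x y _ _.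
by rewrite subrr normr0 mul0r.
Qed.

Lemma LL_add (W : normedModType R) (F G : V -> W) x0 : LL F x0 -> LL G x0 ->
  LL (fun x => F x + G x) x0.
Proof.
move=> [r1 [r10 [L1 [L10 H1]]]] [r2 [r20 [L2 [L20 H2]]]].
exists (Num.min r1 r2); split; first by rewrite lt_min r10 r20.
exists (L1 + L2); split; first by rewrite addr_ge0.
move=> x y xr yr; move: xr yr; rewrite !lt_min => /andP[x1 x2] /andP[y1 y2].
have -> : F x + G x - (F y + G y) = (F x - F y) + (G x - G y).
  by rewrite opprD addrACA.
apply: le_trans (ler_normD _ _) _; rewrite mulrDl.
by apply: lerD; [exact: H1|exact: H2].
Qed.

Lemma LL_scale (W : normedModType R) (a : V -> R) (F : V -> W) x0 :
  LL a x0 -> LL F x0 -> LL (fun x => a x *: F x) x0.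
Proof.
move=> La LF.
have [ra [ra0 [Ma [Ma0 Hma]]]] := LL_bnd La.
have [rf [rf0 [Mf [Mf0 Hmf]]]] := LL_bnd LF.
have m0 : 0 < Num.min ra rf by rewrite lt_min ra0 rf0.
have [r1 [r10 [r1a [L1 [L10 H1]]]]] := LL_shrink La m0.
have [r2 [r20 [r2a [L2 [L20 H2]]]]] := LL_shrink LF r10.
exists r2; split => //.
exists (L1 * Mf + Ma * L2); split; first by rewrite addr_ge0 // mulr_ge0.
have rr1 : r2 <= r1 by [].
have r1ra : r1 <= ra by move: r1a; rewrite le_min => /andP[].
have r1rf : r1 <= rf by move: r1a; rewrite le_min => /andP[].
move=> x y xr yr.
have -> : a x *: F x - a y *: F y = (a x - a y) *: F x + a y *: (F x - F y).
  by rewrite scalerBl scalerBr addrA subrK.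
apply: le_trans (ler_normD _ _) _; rewrite !normrZ mulrDl.
apply: lerD.
  rewrite mulrAC; apply: ler_pM => //.
    by apply: H1; [exact: lt_le_trans xr rr1 | exact: lt_le_trans yr rr1].
  apply: Hmf; apply: lt_le_trans xr _; exact: le_trans rr1 r1rf.
rewrite -mulrA; apply: ler_pM => //.
  apply: Hma; apply: lt_le_trans yr _; exact: le_trans rr1 r1ra.
exact: H2.
Qed.

Lemma LL_mul a k b (A : V -> 'M[R]_(a,k)) (B : V -> 'M[R]_(k,b)) x0 :
  LL A x0 -> LL B x0 -> LL (fun x => A x *m B x) x0.
Proof.
move=> La LB.
have [ra [ra0 [Ma [Ma0 Hma]]]] := LL_bnd La.
have [rf [rf0 [Mf [Mf0 Hmf]]]] := LL_bnd LB.
have m0 : 0 < Num.min ra rf by rewrite lt_min ra0 rf0.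
have [r1 [r10 [r1a [L1 [L10 H1]]]]] := LL_shrink La m0.
have [r2 [r20 [r2a [L2 [L20 H2]]]]] := LL_shrink LB r10.
exists r2; split => //.
exists (k%:R * (L1 * Mf) + k%:R * (Ma * L2)); split.
  by rewrite addr_ge0 // mulr_ge0 // mulr_ge0.
have rr1 : r2 <= r1 by [].
have r1ra : r1 <= ra by move: r1a; rewrite le_min => /andP[].
have r1rf : r1 <= rf by move: r1a; rewrite le_min => /andP[].
move=> x y xr yr.
have -> : A x *m B x - A y *m B y = (A x - A y) *m B x + A y *m (B x - B y).
  by rewrite mulmxBl mulmxBr addrA subrK.
apply: le_trans (ler_normD _ _) _; rewrite mulrDl.
apply: lerD.
  apply: le_trans (mx_mul_norm _ _) _.
  rewrite -mulrA; apply: ler_wpM2l => //.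
  rewrite mulrAC; apply: ler_pM => //.
    by apply: H1; [exact: lt_le_trans xr rr1 | exact: lt_le_trans yr rr1].
  apply: Hmf; apply: lt_le_trans xr _; exact: le_trans rr1 r1rf.
apply: le_trans (mx_mul_norm _ _) _.
rewrite -mulrA; apply: ler_wpM2l => //.
rewrite -mulrA; apply: ler_pM => //.
  apply: Hma; apply: lt_le_trans yr _; exact: le_trans rr1 r1ra.
exact: H2.
Qed.

Lemma LL_comp (U W : normedModType R) (H : V -> U) (F : U -> W) x0 :
  LL H x0 -> LL F (H x0) -> LL (fun x => F (H x)) x0.
Proof.
move=> [rh [rh0 [Lh [Lh0 Hh]]]] [rf [rf0 [Lf [Lf0 Hf]]]].
have Lh1 : 0 < Lh + 1 by rewrite ltr_wpDl.
exists (Num.min rh (rf / (Lh + 1))); split.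
  by rewrite lt_min rh0 divr_gt0.
exists (Lf * Lh); split; first by rewrite mulr_ge0.
have key : forall x, `|x0 - x| < Num.min rh (rf / (Lh + 1)) -> `|H x0 - H x| < rf.
  move=> x; rewrite lt_min => /andP[xh xf].
  have := Hh x0 x; rewrite subrr normr0 => /(_ rh0 xh) H1.
  apply: le_lt_trans H1 _.
  have : Lh * `|x0 - x| <= Lh * (rf / (Lh + 1)).
    by apply: ler_wpM2l => //; apply: ltW.
  move=> H2; apply: le_lt_trans H2 _.
  rewrite mulrA ltr_pdivrMr // mulrC ltr_pM2l //; lra.
move=> x y xr yr.
apply: le_trans (Hf _ _ (key _ xr) (key _ yr)) _.
rewrite -mulrA; apply: ler_wpM2l => //.
by apply: Hh; [apply: lt_le_trans xr _ | apply: lt_le_trans yr _]; rewrite ge_min lexx.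
Qed.

End P4.



Section P5.
Context {R : realType}.
Notation mu := (@lebesgue_measure R).
Notation PI := (parameterized_integral mu).

Lemma cont_integrable (g : R -> R) (A : set R) : continuous g -> compact A ->
  mu.-integrable A (EFin \o g).
Proof.
move=> cg cA; apply: continuous_compact_integrable => //.
exact: continuous_subspaceT.
Qed.

Lemma int_seg_bound (g : R -> R) (v u K : R) : v <= u -> continuous g ->
  (forall s, v <= s <= u -> `|g s| <= K) ->
  `|\int[mu]_(s in `]v, u]) g s| <= K * (u - v).
Proof.
move=> vu cg gK.
have ivu : mu.-integrable `[v, u] (EFin \o g).
  by apply: cont_integrable => //; exact: segment_compact.
have ivu' : mu.-integrable `]v, u] (EFin \o g).
  by apply: integrableS ivu => //; apply: subset_itvr; rewrite bnd_simp.
apply: le_trans (le_normr_Rintegral _ _) _ => //.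
have iabs : mu.-integrable `]v, u] (EFin \o (fun s => `|g s|)).
  apply: integrableS (_ : mu.-integrable `[v, u] _) => //.
    by apply: subset_itvr; rewrite bnd_simp.
  apply: cont_integrable; last exact: segment_compact.
  by move=> x; apply: continuous_comp; [exact: cg | exact: norm_continuous].
have icst : mu.-integrable `]v, u] (EFin \o (fun _ => K)).
  apply: integrableS (_ : mu.-integrable `[v, u] _) => //.
    by apply: subset_itvr; rewrite bnd_simp.
  apply: cont_integrable; last exact: segment_compact.
  exact: cst_continuous.
apply: le_trans (le_Rintegral _ iabs icst _) _ => //.
  by move=> s; rewrite /= in_itv /= => /andP[? ?]; apply: gK; apply/andP; split => //; apply: ltW.
rewrite Rintegral_cst //.
have -> : fine (mu `]v, u]) = u - v.
  apply: (@eq_trans _ _ (fine (lebesgue_measure ([set` `]v, u]] : set R)))); first by [].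
  rewrite lebesgue_measure_itv /=.
  case: ifPn => [_|]; first by [].
  rewrite lte_fin -leNgt => H; have -> : u = v by apply/eqP; rewrite eq_le H vu.
  by rewrite subrr.
by [].
Qed.

Lemma PI_diff (g : R -> R) (a v u K : R) : continuous g -> a <= v -> v <= u ->
  (forall s, v <= s <= u -> `|g s| <= K) ->
  `|PI a u g - PI a v g| <= K * (u - v).
Proof.
move=> cg av vu gK.
rewrite /parameterized_integral.
rewrite (@Rintegral_itvB _ g (BLeft a) (BRight u) v).
- exact: int_seg_bound.
- by apply: cont_integrable => //; exact: segment_compact.
- by rewrite bnd_simp.
- by rewrite bnd_simp.
Qed.

Lemma PI_lip (g : R -> R) (a b v u K : R) : continuous g -> a <= v <= b -> a <= u <= b ->
  (forall s, a <= s <= b -> `|g s| <= K) ->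
  `|PI a u g - PI a v g| <= K * `|u - v|.
Proof.
move=> cg /andP[av vb] /andP[au ub] gK.
have [vu|uv] := leP v u.
  rewrite [X in _ <= _ * X]ger0_norm ?subr_ge0 //; apply: PI_diff => // s /andP[? ?]; apply: gK; lra.
rewrite distrC [X in _ <= _ * X]distrC [X in _ <= _ * X]ger0_norm; last by rewrite subr_ge0 ltW.
apply: PI_diff => //; first exact: ltW.
by move=> s /andP[? ?]; apply: gK; lra.
Qed.

End P5.



Section Small.
Context {R : realType}.

Lemma small_geo (x y c : R) : 0 <= c ->
  (forall k : nat, x <= y + c / (2 ^ k)%:R) -> x <= y.
Proof.
move=> c0 H; rewrite leNgt; apply/negP => xy.
have d0 : 0 < x - y by rewrite subr_gt0.
have [k kP] : exists k : nat, c / (x - y) < k%:R.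
  exists (Num.truncn (c / (x - y))).+1; exact: Num.Theory.truncnS_gt.
have k2 : (k%:R : R) <= (2 ^ k)%:R.
  by rewrite ler_nat; apply: ltnW; apply: ltn_expl.
have := H k.
have p2 : 0 < ((2 ^ k)%:R : R) by rewrite ltr0n expn_gt0.
rewrite -lerBlDl => H2.
have : c / (x - y) < (2 ^ k)%:R by apply: lt_le_trans k2.
rewrite ltr_pdivrMr // => H3.
have : (x - y) * (2 ^ k)%:R <= c.
  by rewrite -ler_pdivlMr //.
rewrite mulrC; lra.
Qed.

End Small.

Section Lim.
Context {R : realType}.

Lemma geo_small (c e : R) : 0 <= c -> 0 < e -> exists N : nat, c / (2 ^ N)%:R < e.
Proof.
move=> c0 e0.
have [k kP] : exists k : nat, c / e < k%:R.
  exists (Num.truncn (c / e)).+1; exact: Num.Theory.truncnS_gt.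
exists k.
have k2 : (k%:R : R) <= (2 ^ k)%:R.
  by rewrite ler_nat; apply: ltnW; apply: ltn_expl.
have p2 : 0 < ((2 ^ k)%:R : R) by rewrite ltr0n expn_gt0.
rewrite ltr_pdivrMr //.
have : c / e < (2 ^ k)%:R by apply: lt_le_trans k2.
rewrite ltr_pdivrMr // => H; lra.
Qed.

Lemma lim_le_bound m (u : nat -> 'cV[R]_m) (l x : 'cV[R]_m) (e : R) (N : nat) :
  u @ \oo --> l -> (forall k, (N <= k)%N -> `|x - u k| <= e) -> `|x - l| <= e.
Proof.
move=> ul H.
apply: (closed_cvg (closed_ball_ Num.norm x e) (@closed_closed_ball_ R _ x e) _ l ul).
exists N => // k /= Nk; exact: H.
Qed.

End Lim.



Section Picard.
Context {R : realType}.
Notation mu := (@lebesgue_measure R).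
Notation PI := (parameterized_integral mu).
Variables (n : nat) (G : 'cV[R]_n -> 'cV[R]_n) (x0 : 'cV[R]_n) (r L M h : R).
Hypotheses (r0 : 0 < r) (L0 : 0 <= L) (M0 : 0 < M) (h0 : 0 < h)
  (hM : M * h <= r / 4) (hL : L * h <= 1 / 4).
Hypothesis HL : forall x y, `|x0 - x| < r -> `|x0 - y| < r -> `|G x - G y| <= L * `|x - y|.
Hypothesis HM : forall x, `|x0 - x| < r -> `|G x| <= M.

Definition clamp (t : R) := if t <= - h then - h else if h <= t then h else t.

Lemma clamp_in t : - h <= clamp t <= h.
Proof. by rewrite /clamp; have [?|?] := leP t (-h); have [?|?] := leP h t; apply/andP; split; move: (h0); lra. Qed.

Lemma clamp_lip t s : `|clamp t - clamp s| <= `|t - s|.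
Proof.
have B1 : t - s <= `|t - s| := ler_norm _.
have B2 : - (t - s) <= `|t - s| by rewrite -normrN ler_norm.
move: B1 B2; set B := `|t - s| => B1 B2.
rewrite /clamp ler_norml; move: (h0) => ?.
by have [?|?] := leP t (-h); have [?|?] := leP h t;
  have [?|?] := leP s (-h); have [?|?] := leP h s; apply/andP; split; lra.
Qed.

Lemma clamp_id t : - h < t < h -> clamp t = t.
Proof.
rewrite /clamp => /andP[? ?]; move: (h0) => ?; have [?|?] := leP t (-h); first lra.
by have [?|?] := leP h t; first lra.
Qed.

Definition pcomp (y : R -> 'cV[R]_n) (i : 'I_n) (s : R) := G (y s) i 0.

Definition Pic (y : R -> 'cV[R]_n) (t : R) : 'cV[R]_n :=
  x0 + \col_i (PI (- h) (clamp t) (pcomp y i) - PI (- h) 0 (pcomp y i)).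

Definition GoodF (y : R -> 'cV[R]_n) :=
  (forall t, `|x0 - y t| <= r / 2) /\ (forall t s, `|y t - y s| <= M * `|t - s|).

Lemma Good_in y t : GoodF y -> `|x0 - y t| < r.
Proof. move=> [H _]; apply: le_lt_trans (H t) _; move: (r0); lra. Qed.

Lemma comp_bound y i s : GoodF y -> `|pcomp y i s| <= M.
Proof.
move=> Gy; apply: le_trans (mx_entry_le _ _ _) _; apply: HM; exact: Good_in.
Qed.

Lemma comp_cont y i : GoodF y -> continuous (pcomp y i).
Proof.
move=> Gy s; apply/cvgrPdist_lt => e e0.
have LM0 : 0 < L * M + 1 by rewrite ltr_wpDl // mulr_ge0 // ltW.
apply/nbhs_ballP; exists (e / (L * M + 1)) => /=; first by rewrite divr_gt0.
move=> t; rewrite /ball_ /= => st.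
have -> : pcomp y i s - pcomp y i t = (G (y s) - G (y t)) i 0 by rewrite /pcomp !mxE.
apply: le_lt_trans (mx_entry_le _ i 0) _.
apply: le_lt_trans (HL (Good_in _ Gy) (Good_in _ Gy)) _.
apply: le_lt_trans (_ : L * (M * `|s - t|) < _).
  by apply: ler_wpM2l => //; case: Gy => _; apply.
have : `|s - t| * (L * M + 1) < e by rewrite -ltr_pdivlMr.
have : 0 <= `|s - t| by [].
move: (L0) (M0); nra.
Qed.

Lemma PI_lipG y i u v : GoodF y -> - h <= u <= h -> - h <= v <= h ->
  `|PI (- h) u (pcomp y i) - PI (- h) v (pcomp y i)| <= M * `|u - v|.
Proof.
move=> Gy uh vh; apply: (PI_lip (b := h)) => //; first exact: comp_cont.
by move=> s _; exact: comp_bound.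
Qed.

Lemma clamp_abs t : `|clamp t| <= h.
Proof. have := clamp_in t; rewrite ler_norml => /andP[? ?]; apply/andP; split => //. Qed.

Lemma clamp0 : clamp 0 = 0.
Proof. by apply: clamp_id; move: (h0); rewrite oppr_lt0 => ->. Qed.

Lemma zero_in : - h <= 0 <= h.
Proof. by move: (h0) => ?; apply/andP; split; lra. Qed.

Lemma P_near y t : GoodF y -> `|Pic y t - x0| <= M * h.
Proof.
move=> Gy; rewrite /Pic addrC addKr.
apply: mx_norm_leP; first by rewrite mulr_ge0 // ltW.
move=> i j; rewrite mxE.
apply: le_trans (PI_lipG _ Gy (clamp_in t) zero_in) _.
by rewrite subr0; apply: ler_wpM2l; [exact: ltW | exact: clamp_abs].
Qed.

Lemma P_lip y t s : GoodF y -> `|Pic y t - Pic y s| <= M * `|t - s|.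
Proof.
move=> Gy; rewrite /Pic opprD addrACA subrr add0r.
apply: mx_norm_leP; first by rewrite mulr_ge0 // ltW.
move=> i j; rewrite !mxE opprB addrA subrK.
apply: le_trans (PI_lipG _ Gy (clamp_in t) (clamp_in s)) _.
by apply: ler_wpM2l; [exact: ltW | exact: clamp_lip].
Qed.

Lemma P_good y : GoodF y -> GoodF (Pic y).
Proof.
move=> Gy; split => [t|t s]; last exact: P_lip.
rewrite distrC; apply: le_trans (P_near _ Gy) _; move: hM (r0); lra.
Qed.

Lemma PI_sub (g g' : R -> R) a u : continuous g -> continuous g' ->
  PI a u g - PI a u g' = PI a u (fun s => g s - g' s).
Proof.
move=> cg cg'; rewrite /parameterized_integral RintegralB //.
  by apply: cont_integrable => //; exact: segment_compact.
by apply: cont_integrable => //; exact: segment_compact.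
Qed.

Lemma P_contr y z D : GoodF y -> GoodF z -> (forall s, `|y s - z s| <= D) ->
  forall t, `|Pic y t - Pic z t| <= D / 2.
Proof.
move=> Gy Gz Hd t.
have D0 : 0 <= D by apply: le_trans (Hd 0).
rewrite /Pic opprD addrACA subrr add0r.
apply: mx_norm_leP; first by rewrite divr_ge0.
move=> i j; rewrite !mxE.
have cy := comp_cont (i:=i) Gy; have cz := comp_cont (i:=i) Gz.
have cd : continuous (fun s => pcomp y i s - pcomp z i s).
  by move=> x; apply: continuousB; [exact: cy | exact: cz].
rewrite (_ : _ - _ = PI (- h) (clamp t) (fun s => pcomp y i s - pcomp z i s)
                   - PI (- h) 0 (fun s => pcomp y i s - pcomp z i s)); last first.
  by rewrite -!PI_sub //; ring.
apply: le_trans (PI_lip (a := - h) (b := h) (K := L * D) cd zero_in (clamp_in t) _) _.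
  move=> s _.
  have -> : pcomp y i s - pcomp z i s = (G (y s) - G (z s)) i 0 by rewrite /pcomp !mxE.
  apply: le_trans (mx_entry_le _ i 0) _.
  apply: le_trans (HL (Good_in _ Gy) (Good_in _ Gz)) _.
  by apply: ler_wpM2l.
rewrite subr0.
have := clamp_abs t; move: (hL) (L0) D0 => ? ? ? ?.
have : L * D * `|clamp t| <= L * D * h by apply: ler_wpM2l => //; rewrite mulr_ge0.
nra.
Qed.

Fixpoint Yit (k : nat) : R -> 'cV[R]_n :=
  if k is k'.+1 then Pic (Yit k') else (fun _ => x0).

Lemma Y_good k : GoodF (Yit k).
Proof.
elim: k => [|k IH] /=; last exact: P_good.
split => [t|t s]; rewrite subrr normr0.
  by move: (r0) => ?; lra.
by rewrite mulr_ge0 // ltW.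
Qed.

Lemma pow2_gt0 k : 0 < ((2 ^ k)%:R : R).
Proof. by rewrite ltr0n expn_gt0. Qed.

Lemma Y_step k t : `|Yit k.+1 t - Yit k t| <= (M * h) / (2 ^ k)%:R.
Proof.
elim: k t => [|k IH] t.
  by rewrite expn0 divr1; exact: (P_near t (Y_good 0)).
rewrite [Yit k.+2]/= [Yit k.+1]/=.
apply: le_trans (P_contr (Y_good _) (Y_good _) IH t) _.
by rewrite expnS natrM invfM mulrCA -mulrA mulrC.
Qed.

Lemma Y_tail k j t : `|Yit (j + k)%N t - Yit k t| <= 2 * (M * h) / (2 ^ k)%:R - 2 * (M * h) / (2 ^ (j + k))%:R.
Proof.
elim: j => [|j IH]; first by rewrite add0n !subrr normr0.
rewrite addSn.
have := Y_step (j + k) t.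
have E : ((2 ^ (j + k).+1)%:R : R) = 2 * (2 ^ (j + k))%:R by rewrite expnS natrM.
rewrite E.
have q0 := pow2_gt0 (j + k).
set c := ((2 ^ (j + k))%:R : R) in q0 IH E *.
have -> : 2 * (M * h) / (2 * c) = (M * h) / c by field; rewrite ?gt_eqF.
move=> H1.
have H2 := ler_normD (Yit (j + k).+1 t - Yit (j + k) t) (Yit (j + k) t - Yit k t).
rewrite addrA subrK in H2.
apply: le_trans H2 _.
have -> : 2 * (M * h) / (2 ^ k)%:R - M * h / c = M * h / c + (2 * (M * h) / (2 ^ k)%:R - 2 * (M * h) / c).
  by field; rewrite !gt_eqF // pow2_gt0.
by apply: lerD.
Qed.

Lemma Y_tail' k m t : (k <= m)%N -> `|Yit m t - Yit k t| <= 2 * (M * h) / (2 ^ k)%:R.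
Proof.
move=> km; have := Y_tail k (m - k) t; rewrite subnK //.
move=> H; apply: le_trans H _; rewrite lerBlDr lerDl.
by rewrite divr_ge0 // ?mulr_ge0 // ?ltW // ltW // pow2_gt0.
Qed.

Lemma Y_cvg t : cvgn (fun k => Yit k t).
Proof.
apply/cauchy_cvgP; apply/cauchy_ballP => e e0; near_simpl.
have c0 : 0 <= 4 * (M * h) by rewrite mulr_ge0 // mulr_ge0 // ltW.
have [N HN] := geo_small c0 e0.
exists ([set k | (N <= k)%N], [set k | (N <= k)%N]); first by split; exists N.
move=> [p q] [/= Np Nq]; rewrite -ball_normE /=.
have H1 := Y_tail' t Np; have H2 := Y_tail' t Nq.
have := ler_normD (Yit p t - Yit N t) (Yit N t - Yit q t).
rewrite addrA subrK => H3; apply: le_lt_trans H3 _.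
rewrite (distrC (Yit N t)).
have E : 4 * (M * h) / (2 ^ N)%:R = 2 * (M * h) / (2 ^ N)%:R + 2 * (M * h) / (2 ^ N)%:R.
  by field; rewrite gt_eqF // pow2_gt0.
move: HN H1 H2; rewrite E; lra.
Qed.

Definition Ylim t := limn (fun k => Yit k t).

Lemma Yl_cvg t : (fun k => Yit k t) @ \oo --> Ylim t.
Proof. exact: Y_cvg. Qed.

Lemma Yl_near k t : `|Yit k t - Ylim t| <= 2 * (M * h) / (2 ^ k)%:R.
Proof.
apply: (lim_le_bound (Yl_cvg (t:=t)) (N := k)) => m km.
by rewrite distrC; exact: Y_tail'.
Qed.

Lemma Yl_good : GoodF Ylim.
Proof.
split => [t|t s].
  apply: (lim_le_bound (Yl_cvg (t:=t)) (N := 0)) => m _.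
  by case: (Y_good m) => H _; exact: H.
have c0 : 0 <= 4 * (M * h) by rewrite mulr_ge0 // mulr_ge0 // ltW.
apply: (small_geo c0) => k.
have H1 := Yl_near k t; have H2 := Yl_near k s.
have [_ H3] := Y_good k; have {}H3 := H3 t s.
have T1 := ler_normD (Ylim t - Yit k t) (Yit k t - Yit k s).
have T2 := ler_normD (Ylim t - Yit k s) (Yit k s - Ylim s).
rewrite subrKA in T1; rewrite subrKA in T2.
rewrite distrC in H1.
have E : 4 * (M * h) / (2 ^ k)%:R = 2 * (M * h) / (2 ^ k)%:R + 2 * (M * h) / (2 ^ k)%:R.
  by field; rewrite gt_eqF // pow2_gt0.
rewrite E; move: H1 H2 H3 T1 T2.
set q := 2 * (M * h) / (2 ^ k)%:R; set A := M * `|t - s|; lra.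
Qed.

Lemma Yl_fix t : Pic Ylim t = Ylim t.
Proof.
apply/eqP; rewrite -subr_eq0 -normr_le0.
have c0 : 0 <= 2 * (M * h) by rewrite mulr_ge0 // mulr_ge0 // ltW.
apply: (small_geo c0) => k; rewrite add0r.
have Hd : forall s, `|Ylim s - Yit k s| <= 2 * (M * h) / (2 ^ k)%:R.
  by move=> s; rewrite distrC; exact: Yl_near.
have H1 := P_contr Yl_good (Y_good k) Hd t.
have H2 := Yl_near k.+1 t.
have E : 2 * (M * h) / (2 ^ k.+1)%:R = 2 * (M * h) / (2 ^ k)%:R / 2.
  by rewrite expnS natrM; field; rewrite gt_eqF // pow2_gt0.
rewrite E [Yit k.+1]/= in H2.
have T := ler_normD (Pic Ylim t - Pic (Yit k) t) (Pic (Yit k) t - Ylim t).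
rewrite subrKA in T.
move: H1 H2 T; set q := 2 * (M * h) / (2 ^ k)%:R; lra.
Qed.

Lemma Yl0 : Ylim 0 = x0.
Proof.
rewrite -Yl_fix /Pic clamp0.
apply/matrixP => i j; rewrite !mxE subrr addr0 //.
Qed.

Definition Qd (s : R) : 'cV[R]_n :=
  x0 + \col_i (PI (- h) s (pcomp Ylim i) - PI (- h) 0 (pcomp Ylim i)).

Lemma Q_Yl t : - h < t < h -> \forall s \near t, Qd s = Ylim s.
Proof.
move=> /andP[t1 t2].
apply/nbhs_ballP; exists (Num.min (t + h) (h - t)) => /=.
  by rewrite lt_min; apply/andP; split; lra.
move=> s; rewrite -ball_normE /ball_ /= lt_min => /andP[s1 s2].
move: s1 s2; rewrite !ltr_distlC => /andP[s1 s1'] /andP[s2 s2'].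
have sh : - h < s < h by apply/andP; split; lra.
by rewrite -Yl_fix /Pic /Qd clamp_id.
Qed.

Lemma is_derive_mx a b (F : R -> 'M[R]_(a, b)) (t : R) (D : 'M[R]_(a, b)) :
  (forall i j, is_derive t (1:R) (fun s => F s i j) (D i j)) -> is_derive t (1:R) F D.
Proof.
move=> H.
have dv : derivable F t 1 by apply/derivable_mxP => i j; case: (H i j).
apply: DeriveDef => //; rewrite derive_mx //.
by apply/matrixP => i j; rewrite mxE; case: (H i j).
Qed.

Lemma PI_derive (g : R -> R) t : continuous g -> - h < t < h ->
  is_derive t (1:R) (fun s => PI (- h) s g) (g t).
Proof.
move=> cg /andP[t1 t2].
have := @continuous_FTC1_closed R g (- h) t h t2 _ t1 (cg t).
case.
  by apply: cont_integrable => //; exact: segment_compact.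
move=> d1 d2; apply: DeriveDef => //.
by rewrite -derive1E.
Qed.

Lemma Q_derive t : - h < t < h -> is_derive t (1:R) Qd (G (Ylim t)).
Proof.
move=> th; apply: is_derive_mx => i j.
rewrite /Qd.
have -> : (fun s => (x0 + \col_i0 (PI (- h) s (pcomp Ylim i0) - PI (- h) 0 (pcomp Ylim i0))) i j)
   = (fun s => x0 i j + (PI (- h) s (pcomp Ylim i) - PI (- h) 0 (pcomp Ylim i))).
  by apply: funext => s; rewrite !mxE.
have -> : G (Ylim t) i j = 0 + (pcomp Ylim i t - 0).
  by rewrite /pcomp subr0 add0r (ord1 j).
have := PI_derive (comp_cont (i:=i) Yl_good) th.
move=> D; apply: is_deriveD; apply: is_deriveB.
Qed.

Lemma picard_exists : exists phi : R -> 'cV[R]_n, phi 0 = x0 /\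
  forall t, - h < t < h -> `|x0 - phi t| < r /\ is_derive t (1:R) phi (G (phi t)).
Proof.
exists Ylim; split; first exact: Yl0.
move=> t th; split; first exact: Good_in Yl_good.
apply: near_eq_is_derive (Q_Yl th) (Q_derive th).
Qed.

End Picard.



Section Uniq.
Context {R : realType}.
Variables (N : nat) (w dw : R -> 'cV[R]_N) (L : R).
Hypothesis L0 : 0 <= L.

Lemma uniq_step (s0 s1 : R) : s0 <= s1 -> (s1 - s0) * L <= 1 / 2 ->
  w s0 = 0 ->
  (forall s, s0 <= s <= s1 -> is_derive s (1:R) w (dw s) /\ `|dw s| <= L * `|w s|) ->
  forall s, s0 <= s <= s1 -> w s = 0.
Proof.
move=> s01 sL ws0 H.
have cw : {within `[s0, s1], continuous (fun s => `|w s|)}.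
  apply: continuous_in_subspaceT => x; rewrite inE /= in_itv /= => xi.
  have [[dv _] _] := H x xi.
  apply: (continuous_comp (f := w) (g := Num.norm)); last exact: norm_continuous.
  by apply: differentiable_continuous; rewrite -derivable1_diffP.
have [c ci cmax] := EVT_max s01 cw.
move: ci; rewrite in_itv /= => ci.
have key : forall s, s0 <= s <= s1 -> `|w s| <= `|w c| / 2.
  move=> s /andP[ss0 ss1].
  have := MVI_mx (w := w) (dw := dw) (s0 := s0) (s1 := s) (B := L * `|w c|) ss0.
  rewrite ws0 subr0 => HM.
  have Hws : `|w s| <= L * `|w c| * (s - s0).
    apply: HM.
      move=> t /andP[? ?].
      have ti : s0 <= t <= s1 by apply/andP; split; lra.
      by case: (H t ti).
    move=> t /andP[? ?].
    have ti : s0 <= t <= s1 by apply/andP; split; lra.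
    have [_ Ht] := H t ti.
    apply: le_trans Ht _; apply: ler_wpM2l => //.
    by apply: cmax; rewrite in_itv /=.
  have wc0 : 0 <= `|w c| by [].
  have H1 : (s - s0) * L <= 1 / 2.
    apply: le_trans sL; apply: ler_wpM2r => //; lra.
  have E : L * `|w c| * (s - s0) = `|w c| * ((s - s0) * L) by ring.
  rewrite E in Hws; have := ler_wpM2l wc0 H1; lra.
have : `|w c| <= `|w c| / 2 by apply: key.
have wc0 : 0 <= `|w c| by [].
move=> Hc; have wc : `|w c| = 0 by lra.
move=> s si; apply/eqP; rewrite -normr_le0.
apply: le_trans (cmax s _) _; first by rewrite in_itv.
by rewrite wc.
Qed.

Lemma uniq_w (d : R) : w 0 = 0 ->
  (forall s, 0 <= s <= d -> is_derive s (1:R) w (dw s) /\ `|dw s| <= L * `|w s|) ->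
  forall s, 0 <= s <= d -> w s = 0.
Proof.
move=> w0 H.
pose e : R := 1 / (2 * (L + 1)).
have e0 : 0 < e by rewrite /e divr_gt0 // mulr_gt0 // ltr_wpDl.
have eL : e * L <= 1 / 2.
  rewrite /e; have L1 : 0 < L + 1 by rewrite ltr_wpDl.
  rewrite mulrC mulrA ler_pdivrMr ?mulr_gt0 //; lra.
have claim : forall j : nat, forall s, 0 <= s <= d -> s <= j%:R * e -> w s = 0.
  elim => [|j IH] s /andP[s0 sd] sj.
    by have -> : s = 0 by rewrite mul0r in sj; apply/eqP; rewrite eq_le sj s0.
  have [sj'|sj'] := leP s (j%:R * e).
    by apply: IH => //; apply/andP; split.
  have j0 : 0 <= j%:R * e by rewrite mulr_ge0 // ltW.
  have wj : w (j%:R * e) = 0.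
    by apply: IH => //; apply/andP; split => //; lra.
  apply: (@uniq_step (j%:R * e) s) => //.
  - exact: ltW.
  - rewrite -natr1 mulrDl mul1r in sj.
    apply: le_trans eL; apply: ler_wpM2r => //; lra.
  - move=> t /andP[? ?]; apply: H; apply/andP; split; lra.
  - by apply/andP; split; [exact: ltW|].
move=> s /andP[s0 sd].
apply: (claim (Num.truncn (d / e)).+1) => //; first by apply/andP.
have := Num.Theory.truncnS_gt (d / e).
rewrite ltr_pdivrMr // => H1; lra.
Qed.

End Uniq.



Section Aux.
Context {R : realType}.

Lemma is_derive_shiftT (V : normedModType R) (phi : R -> V) (t0 s : R) (D : V) :
  is_derive (t0 + s) (1:R) phi D -> is_derive s (1:R) (fun s => phi (t0 + s)) D.
Proof.
have E : (fun h : R => h^-1 *: ((fun s => phi (t0 + s)) (h *: (1:R) + s) - phi (t0 + s)))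
   = (fun h : R => h^-1 *: (phi (h *: (1:R) + (t0 + s)) - phi (t0 + s))).
  by apply: funext => h /=; rewrite addrCA.
move=> [dv Dv]; apply: DeriveDef.
  by move: dv; rewrite /derivable E.
by rewrite /derive E.
Qed.

Lemma open_ball_norm (V : normedModType R) (X : set V) x : open X -> X x ->
  exists r, 0 < r /\ forall y, `|x - y| < r -> X y.
Proof.
move=> oX Xx.
have : nbhs x X by apply: open_nbhs_nbhs; split.
move=> /nbhs_ballP[r r0 Hr]; exists r; split => // y xy.
by apply: Hr; rewrite -ball_normE.
Qed.

Lemma col_mx0_norm a p (v : 'cV[R]_a) : `|col_mx v (0 : 'cV[R]_p)| <= `|v|.
Proof.
apply: mx_norm_leP => // i j; rewrite /col_mx mxE.
case: splitP => k _; first exact: mx_entry_le.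
by rewrite mxE normr0.
Qed.

Lemma usub_norm a p (v : 'cV[R]_(a + p)) : `|usubmx v| <= `|v|.
Proof.
by apply: mx_norm_leP => // i j; rewrite mxE; exact: mx_entry_le.
Qed.

Lemma LL_usub a p (x0 : 'cV[R]_(a + p)) : LL (fun xh : 'cV[R]_(a + p) => usubmx xh) x0.
Proof.
exists 1; split => //; exists 1; split => // x y _ _.
by rewrite mul1r -linearB /=; exact: usub_norm.
Qed.

Lemma LL_col0 (V : normedModType R) a p (F : V -> 'cV[R]_a) x0 : LL F x0 ->
  LL (fun x => col_mx (F x) (0 : 'cV[R]_p)) x0.
Proof.
move=> [r [r0 [L [L0 H]]]]; exists r; split => //; exists L; split => // x y xr yr.
have -> : col_mx (F x) (0 : 'cV[R]_p) - col_mx (F y) 0 = col_mx (F x - F y) 0.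
  by rewrite opp_col_mx add_col_mx subrr.
apply: le_trans (col_mx0_norm _ _) _; exact: H.
Qed.

Lemma is_derive_col a p (psi : R -> 'cV[R]_a) (th : 'cV[R]_p) (s : R) D :
  is_derive s (1:R) psi D ->
  is_derive s (1:R) (fun s => col_mx (psi s) th) (col_mx D 0).
Proof.
move=> dpsi; apply: is_derive_mx => i j.
case: (splitP i) => k Ei.
  have -> : i = lshift p k by apply: val_inj.
  have -> : (fun s => col_mx (psi s) th (lshift p k) j) = (fun s => psi s k j).
    by apply: funext => s'; rewrite col_mxEu.
  rewrite col_mxEu; exact: is_derive_entry.
have -> : i = rshift a k by apply: val_inj.
have -> : (fun s => col_mx (psi s) th (rshift a k) j) = (fun s => th k j).
  by apply: funext => s'; rewrite col_mxEd.
rewrite col_mxEd mxE; exact: is_derive_cst.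
Qed.

Lemma ode_exists n (G : 'cV[R]_n -> 'cV[R]_n) (x0 : 'cV[R]_n) (rho : R) :
  0 < rho -> LL G x0 -> exists h : R, 0 < h /\ exists phi : R -> 'cV[R]_n, phi 0 = x0 /\
    forall t : R, - h < t < h -> `|x0 - phi t| < rho /\ is_derive t (1:R) phi (G (phi t)).
Proof.
move=> rho0 LG.
have [rM [rM0 [M [M0 HM]]]] := LL_bnd LG.
have [rL [rL0 [L [L0 HL]]]] := LG.
pose r := Num.min rho (Num.min rL rM).
have r0 : 0 < r by rewrite !lt_min rho0 rL0 rM0.
have rrho : r <= rho by rewrite ge_min lexx.
have rrL : r <= rL by rewrite !ge_min lexx orbT.
have rrM : r <= rM by rewrite !ge_min lexx !orbT.
pose M' := M + 1.
have M'0 : 0 < M' by rewrite ltr_wpDl.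
have L1 : 0 < L + 1 by rewrite ltr_wpDl.
pose h := Num.min (r / (4 * M')) (1 / (4 * (L + 1))).
have h0 : 0 < h by rewrite lt_min !divr_gt0 // mulr_gt0.
have hM : M' * h <= r / 4.
  have : h <= r / (4 * M') by rewrite ge_min lexx.
  rewrite ler_pdivlMr ?mulr_gt0 // => H.
  rewrite ler_pdivlMr //; lra.
have hL : L * h <= 1 / 4.
  have : h <= 1 / (4 * (L + 1)) by rewrite ge_min lexx orbT.
  rewrite ler_pdivlMr ?mulr_gt0 // => H.
  rewrite ler_pdivlMr //.
  have : 0 <= h by exact: ltW.
  nra.
have HL' : forall x y, `|x0 - x| < r -> `|x0 - y| < r -> `|G x - G y| <= L * `|x - y|.
  by move=> x y xr yr; apply: HL; apply: lt_le_trans rrL.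
have HM' : forall x, `|x0 - x| < r -> `|G x| <= M'.
  move=> x xr; apply: le_trans (HM x (lt_le_trans xr rrM)) _; rewrite /M'; lra.
have [phi [phi0 Hphi]] := picard_exists r0 L0 M'0 h0 hM hL HL' HM'.
exists h; split => //; exists phi; split => // t th.
have [H1 H2] := Hphi t th; split => //; exact: lt_le_trans rrho.
Qed.

Lemma LL_1m (V : normedModType R) (a : V -> R) x0 : LL a x0 -> LL (fun x => 1 - a x) x0.
Proof.
move=> [r [r0 [L [L0 H]]]]; exists r; split => //; exists L; split => // x y xr yr.
have -> : 1 - a x - (1 - a y) = - (a x - a y) by ring.
rewrite normrN; exact: H.
Qed.

Lemma LL_ext (V W : normedModType R) (F F' : V -> W) x0 : (forall x, F x = F' x) ->
  LL F x0 -> LL F' x0.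
Proof. by move=> E; have -> : F = F' by apply: funext. Qed.

End Aux.

Lemma MVI_R2 {R : realType} : @MVI R R.
Proof. move=> w dw s0 s1 B; exact: mvi_R. Qed.

Section Aux2.
Context {R : realType}.

Lemma LL_cont (V W : normedModType R) (F : V -> W) x0 : LL F x0 -> {for x0, continuous F}.
Proof.
move=> [r [r0 [L [L0 H]]]]; apply/cvgrPdist_lt => e e0.
have L1 : 0 < L + 1 by rewrite ltr_wpDl.
apply/nbhs_ballP; exists (Num.min r (e / (L + 1))) => /=.
  by rewrite lt_min r0 divr_gt0.
move=> y; rewrite -ball_normE /= lt_min => /andP[y1 y2].
have x0r : `|x0 - x0| < r by rewrite subrr normr0.
apply: le_lt_trans (H _ _ x0r y1) _.
move: y2; rewrite ltr_pdivlMr // => y2.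
have : 0 <= `|x0 - y| by [].
nra.
Qed.

Lemma cont_delta (V : normedModType R) (f : R -> V) t0 e : {for t0, continuous f} -> 0 < e ->
  exists d, 0 < d /\ forall t, `|t0 - t| < d -> `|f t0 - f t| < e.
Proof.
move=> cf e0; move/cvgrPdist_lt: cf => /(_ e e0) /nbhs_ballP [d d0 Hd].
by exists d; split => // t td; apply: Hd; rewrite -ball_normE.
Qed.

End Aux2.


Unset Implicit Arguments. Set Strict Implicit. Set Printing Implicit Defensive.


Theorem lemma4 (R : realType) (n m p : nat)
    (X : set 'cV[R]_n) (U : set 'cV[R]_m)
    (f : 'cV[R]_n -> 'cV[R]_n) (g : 'cV[R]_n -> 'M[R]_(n, m))
    (h hb : 'cV[R]_n -> R) (kb : 'cV[R]_n -> 'cV[R]_m)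
    (ke : 'cV[R]_n -> 'cV[R]_p -> 'cV[R]_m) (eta : 'cV[R]_n -> R) :
  open X ->
  C1_on X f -> C1_on X g ->
  convex_polytope U ->
  C1_on X h ->
  let CS := [set x | X x /\ 0 <= h x] in
  let CB := [set x | X x /\ 0 <= hb x] in
  (* backup controller *)
  C1_on X kb -> (forall x, X x -> U (kb x)) ->
  C1_on X hb ->
  (forall x, bdry CB x -> exists v, 'D_v hb x != 0) ->
  CB `<=` CS ->
  forward_invariant X (fun x => f x + g x *m kb x) CB ->
  (* parameterized expanding controller *)
  C1_on [set xh : 'cV[R]_(n + p) | X (usubmx xh)]
        (fun xh => ke (usubmx xh) (dsubmx xh)) ->
  (forall x th, X x -> U (ke x th)) ->
  (* blending function *)
  C1_on X eta -> (forall x, X x -> 0 <= eta x <= 1) ->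
  (forall x, CB x -> eta x = 1) ->
  (* augmented system *)
  let hatX := [set xh : 'cV[R]_(n + p) | X (usubmx xh)] in
  let fhat := fun xh : 'cV[R]_(n + p) =>
                col_mx (f (usubmx xh)) (0 : 'cV[R]_p) in
  let ghat := fun xh : 'cV[R]_(n + p) =>
                block_mx (g (usubmx xh)) (0 : 'M[R]_(n, p))
                         (0 : 'M[R]_(p, m)) (1%:M : 'M[R]_p) in
  let ks := fun xh : 'cV[R]_(n + p) =>
              col_mx ((1 - eta (usubmx xh)) *: ke (usubmx xh) (dsubmx xh)
                      + eta (usubmx xh) *: kb (usubmx xh)) (0 : 'cV[R]_p) in
  let hatCB := [set xh | hatX xh /\ 0 <= hb (usubmx xh)] in
  forward_invariant hatX (fun xh => fhat xh + ghat xh *m ks xh) hatCB.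
Proof.
move=> oX C1f C1g _ _ CS CB C1kb _ C1hb _ _ FIb C1ke _ C1eta _ eta1 hatX fhat ghat ks hatCB.
pose Fb := fun x : 'cV[R]_n => f x + g x *m kb x.
pose Fs := fun xh : 'cV[R]_(n + p) => f (usubmx xh) + g (usubmx xh) *m
   ((1 - eta (usubmx xh)) *: ke (usubmx xh) (dsubmx xh) + eta (usubmx xh) *: kb (usubmx xh)).
pose FH := fun xh : 'cV[R]_(n + p) => fhat xh + ghat xh *m ks xh.
have FHE : forall xh, FH xh = col_mx (Fs xh) 0.
  move=> xh; rewrite /FH /fhat /ghat /ks mul_block_col !mul0mx !mulmx0 !addr0 add_col_mx addr0.
  by [].
have ballX : forall x, X x -> exists r, 0 < r /\ forall y, `|x - y| < r -> X y.
  by move=> x Xx; exact: open_ball_norm.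
have ballhX : forall xh : 'cV[R]_(n + p), X (usubmx xh) ->
    exists r, 0 < r /\ forall y, `|xh - y| < r -> hatX y.
  move=> xh /ballX [r [r0 Hr]]; exists r; split => // y xy; apply: Hr.
  by apply: le_lt_trans xy; rewrite -linearB /=; exact: usub_norm.
have LLu : forall (W : normedModType R) (F : 'cV[R]_n -> W), MVI W -> C1_on X F ->
    forall xh : 'cV[R]_(n + p), X (usubmx xh) -> LL (fun xh => F (usubmx xh)) xh.
  move=> W F mW CF xh Xu; apply: LL_comp; first exact: LL_usub.
  exact: (C1_LL mW CF (ballX _ Xu)).
have LLFs : forall xh, X (usubmx xh) -> LL Fs xh.
  move=> xh Xu.
  apply: LL_add; first exact: LLu (@MVI_mx R _ _) C1f xh Xu.
  apply: LL_mul; first exact: LLu (@MVI_mx R _ _) C1g xh Xu.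
  apply: LL_add; apply: LL_scale.
  - apply: LL_1m; exact: LLu MVI_R2 C1eta xh Xu.
  - exact: (C1_LL (@MVI_mx R _ _) C1ke (ballhX _ Xu)).
  - exact: LLu MVI_R2 C1eta xh Xu.
  - exact: LLu (@MVI_mx R _ _) C1kb xh Xu.
have LLFH : forall xh, X (usubmx xh) -> LL FH xh.
  move=> xh Xu; apply: (LL_ext (F := fun xh => col_mx (Fs xh) 0)).
    by move=> y; rewrite FHE.
  exact: LL_col0 (LLFs xh Xu).
have LLFb : forall x, X x -> LL Fb x.
  move=> x Xx; apply: LL_add; first exact: (C1_LL (@MVI_mx R _ _) C1f (ballX _ Xx)).
  apply: LL_mul; first exact: (C1_LL (@MVI_mx R _ _) C1g (ballX _ Xx)).
  exact: (C1_LL (@MVI_mx R _ _) C1kb (ballX _ Xx)).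
move=> phi T T0 sol phi0.
have solt : forall t, 0 <= t <= T -> hatX (phi t) /\ is_derive t (1:R) phi (FH (phi t)).
  exact: sol.
pose S := [set t : R | (0 <= t <= T) /\ forall tau, 0 <= tau <= t -> hatCB (phi tau)].
have S0 : S 0.
  split; first by rewrite lexx T0.
  move=> tau /andP[t1 t2]; have -> : tau = 0 by apply/eqP; rewrite eq_le t1 t2.
  exact: phi0.
have ubS : ubound S T by move=> t [/andP[_ ?] _].
have hasS : has_sup S by split; [exists 0 | exists T].
pose t0 := sup S.
have t00 : 0 <= t0 by exact: sup_upper_bound.
have t0T : t0 <= T by apply: ge_sup => //; exists 0.
have below : forall tau, 0 <= tau -> tau < t0 -> hatCB (phi tau).
  move=> tau tau0 taut0.
  have e0 : 0 < t0 - tau by rewrite subr_gt0.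
  have [x [_ Hx] xt] := sup_adherent e0 hasS.
  apply: Hx; rewrite tau0 /=; move: xt; rewrite /t0; lra.
have t0i : 0 <= t0 <= T by rewrite t00 t0T.
have at0 : hatCB (phi t0).
  have [hX0 dphi0] := solt t0 t0i.
  split => //.
  have [->|t0p] := eqVneq t0 0; first by case: phi0.
  have t0pos : 0 < t0 by rewrite lt_neqAle eq_sym t0p t00.
  rewrite leNgt; apply/negP => hneg.
  have ck : {for t0, continuous (fun tau => hb (usubmx (phi tau)))}.
    apply: (continuous_comp (f := phi) (g := fun xh => hb (usubmx xh))).
      apply: differentiable_continuous; rewrite -derivable1_diffP.
      by case: dphi0.
    apply: (continuous_comp (f := fun xh : 'cV[R]_(n + p) => usubmx xh) (g := hb)).
      exact: LL_cont (LL_usub _).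
    apply: differentiable_continuous; case: C1hb => + _; apply; exact: hX0.
  have e0 : 0 < - hb (usubmx (phi t0)) by rewrite oppr_gt0.
  have [d [d0 Hd]] := cont_delta ck e0.
  pose tau := t0 - Num.min t0 d / 2.
  have m0 : 0 < Num.min t0 d by rewrite lt_min t0pos d0.
  have md : Num.min t0 d <= d by rewrite ge_min lexx orbT.
  have mt : Num.min t0 d <= t0 by rewrite ge_min lexx.
  have tau0 : 0 <= tau by rewrite /tau; lra.
  have taut : tau < t0 by rewrite /tau; lra.
  have := Hd tau; rewrite /tau opprB addrC subrK ger0_norm; last lra.
  move=> /(_ ltac:(lra)).
  have [_ hbt] := below _ tau0 taut.
  rewrite /tau in hbt.
  rewrite distrC => H.
  move: (ler_norm (hb (usubmx (phi (t0 - Num.min t0 d / 2))) - hb (usubmx (phi t0)))).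
  lra.
have t0S : S t0.
  split => // tau /andP[tau0 taut].
  have [lt|ge] := ltP tau t0; first exact: below.
  by have -> : tau = t0 by apply/eqP; rewrite eq_le taut ge.
have t0eqT : t0 = T.
  apply/eqP; rewrite eq_le t0T /= leNgt; apply/negP => t0lt.
  set xh0 := phi t0.
  have [Xu0 hb0] : X (usubmx xh0) /\ 0 <= hb (usubmx xh0) by exact: at0.
  have CB0 : CB (usubmx xh0) by split.
  have [rH [rH0 [LH [LH0 HLH]]]] := LLFH xh0 Xu0.
  have [rX [rX0 HrX]] := ballX _ Xu0.
  have rho0 : 0 < Num.min rH rX by rewrite lt_min rH0 rX0.
  have [h1 [h10 [psi [psi0 Hpsi]]]] := ode_exists rho0 (LLFb _ Xu0).
  have psiX : forall s, - h1 < s < h1 -> X (psi s).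
    move=> s /Hpsi [H1 _]; apply: HrX; apply: lt_le_trans H1 _; by rewrite ge_min lexx orbT.
  have psiCB : forall s, 0 <= s <= h1 / 2 -> CB (psi s).
    have sol_b : is_solution X Fb psi (h1 / 2).
      move=> s /andP[s0 s1]; have si : - h1 < s < h1 by apply/andP; split; lra.
      split; first exact: psiX.
      by case: (Hpsi s si).
    have h2 : 0 <= h1 / 2 by lra.
    move=> s si; apply: (FIb psi (h1 / 2) h2 sol_b) => //.
    by rewrite psi0.
  pose th0 := dsubmx xh0.
  pose psih := fun s => (col_mx (psi s) th0 : 'cV[R]_(n + p)).
  have FHpsih : forall s, 0 <= s <= h1 / 2 -> FH (psih s) = col_mx (Fb (psi s)) 0.
    move=> s si; rewrite FHE /Fs /psih col_mxKu col_mxKd.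
    have -> : eta (psi s) = 1 by apply: eta1; exact: psiCB.
    by rewrite subrr scale0r add0r scale1r.
  have dpsih : forall s, 0 <= s <= h1 / 2 -> is_derive s (1:R) psih (FH (psih s)).
    move=> s si; rewrite FHpsih //; apply: is_derive_col.
    have si' : - h1 < s < h1 by move: si => /andP[? ?]; apply/andP; split; lra.
    by case: (Hpsi s si').
  have cphi : {for t0, continuous phi}.
    have [_ [dv _]] := solt t0 t0i.
    by apply: differentiable_continuous; rewrite -derivable1_diffP.
  have [d1 [d10 Hd1]] := cont_delta cphi rH0.
  pose d := Num.min (h1 / 2) (Num.min (T - t0) (d1 / 2)).
  have d0 : 0 < d by rewrite !lt_min; apply/and3P; split; lra.
  have dh : d <= h1 / 2 by rewrite ge_min lexx.
  have dT : d <= T - t0 by rewrite !ge_min lexx orbT.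
  have dd1 : d <= d1 / 2 by rewrite !ge_min lexx !orbT.
  pose w := fun s => phi (t0 + s) - psih s.
  pose dw := fun s => FH (phi (t0 + s)) - FH (psih s).
  have w0 : w 0 = 0 by rewrite /w /psih addr0 psi0 /th0 vsubmxK subrr.
  have Hw : forall s, 0 <= s <= d -> is_derive s (1:R) w (dw s) /\ `|dw s| <= LH * `|w s|.
    move=> s /andP[s0 sd]; split.
      apply: is_deriveB.
        apply: is_derive_shiftT.
        have : 0 <= t0 + s <= T by apply/andP; split; lra.
        by case/solt.
      by apply: dpsih; apply/andP; split; lra.
    apply: HLH.
      apply: Hd1; rewrite opprD addrA subrr add0r normrN ger0_norm //; lra.
    have -> : xh0 - psih s = col_mx (usubmx xh0 - psi s) 0.
      by rewrite /psih -{1}(vsubmxK xh0) opp_col_mx add_col_mx /th0 subrr.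
    apply: le_lt_trans (col_mx0_norm _ _) _.
    have si' : - h1 < s < h1 by apply/andP; split; lra.
    have [H1 _] := Hpsi s si'.
    by apply: lt_le_trans H1 _; rewrite ge_min lexx.
  have weq := uniq_w LH0 w0 Hw.
  have CBs : forall s, 0 <= s <= d -> hatCB (phi (t0 + s)).
    move=> s si; have := weq s si; rewrite /w => /eqP; rewrite subr_eq0 => /eqP ->.
    rewrite /hatCB /hatX /psih /= col_mxKu.
    by apply: psiCB; move: si => /andP[? ?]; apply/andP; split; lra.
  have Sd : S (t0 + d).
    split; first by apply/andP; split; lra.
    move=> tau /andP[tau0 taud].
    have [le|gt] := leP tau t0.
      by case: t0S => _; apply; rewrite tau0 le.
    have := CBs (tau - t0); rewrite subrKC; apply; apply/andP; split; lra.
  have := sup_upper_bound hasS Sd; rewrite -/t0; lra.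
move=> t /andP[t1 t2]; case: t0S => _; apply; by rewrite t1 t0eqT t2.
Qed.
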